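(* For any $n\geq 2$, the class $\mathcal{PO}_n$ of all finite partial orders of dimension at most $n$ does not satisfy the amalgamation property.
   Context: The dimension of a partial order $(P,<)$ is the minimum number of linear orders on $P$ whose intersection is $<$. Embeddings of partial orders are injective maps $f$ with $a<b\iff f(a)<f(b)$. A class $\mathcal{K}$ satisfies the amalgamation property if for all $\mathbf{A},\mathbf{B},\mathbf{C}\in\mathcal{K}$ and embeddings $e:\mathbf{A}\to\mathbf{B}$, $f:\mathbf{A}\to\mathbf{C}$, there are $\mathbf{D}\in\mathcal{K}$ and embeddings $g:\mathbf{B}\to\mathbf{D}$, $h:\mathbf{C}\to\mathbf{D}$ with $g\circ e=h\circ f$. *)

(* Defs.v *)
From mathcomp Require Import all_boot.
Set Implicit Arguments. Unset Strict Implicit. Unset Printing Implicit Defensive.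

Record finPO := FinPO {
  po_carrier :> finType;
  po_lt : rel po_carrier;
  po_irr : irreflexive po_lt;
  po_trans : transitive po_lt
}.

Definition linear_order (T : finType) (l : rel T) : Prop :=
  irreflexive l /\ transitive l /\ (forall x y : T, x != y -> l x y || l y x).

Definition dim_le (P : finPO) (n : nat) : Prop :=
  exists L : 'I_n -> rel P,
    (forall i, linear_order (L i)) /\
    (forall x y : P, po_lt x y = [forall i, L i x y]).

Definition PO_ (n : nat) (P : finPO) : Prop := dim_le P n.

Definition po_embedding (A B : finPO) (f : A -> B) : Prop :=
  injective f /\ (forall a b : A, po_lt a b = po_lt (f a) (f b)).

Definition amalgamation_property (K : finPO -> Prop) : Prop :=
  forall (A B C : finPO) (e : A -> B) (f : A -> C),
    K A -> K B -> K C -> po_embedding e -> po_embedding f ->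
    exists (D : finPO) (g : B -> D) (h : C -> D),
      K D /\ po_embedding g /\ po_embedding h /\
      (forall a : A, g (e a) = h (f a)).

(* Main.v *)
Require Import Defs.
From HB Require Import structures.
From mathcomp Require Import zify.
From mathcomp Require Import all_boot.
Inductive elt (n : nat) : Type := EA of 'I_n | EB of 'I_n | EP | EQ | ER | EX | EY | EW.
Arguments EP {n}. Arguments EQ {n}. Arguments ER {n}. Arguments EX {n}. Arguments EY {n}. Arguments EW {n}.
Arguments EA {n}. Arguments EB {n}.
Definition enc n (t : elt n) : ('I_n + 'I_n + 'I_6)%type :=
  match t with EA i => inl (inl i) | EB i => inl (inr i)
  | EP => inr (@Ordinal 6 0 isT) | EQ => inr (@Ordinal 6 1 isT) | ER => inr (@Ordinal 6 2 isT)
  | EX => inr (@Ordinal 6 3 isT) | EY => inr (@Ordinal 6 4 isT) | EW => inr (@Ordinal 6 5 isT) end.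
Definition dec n (s : ('I_n + 'I_n + 'I_6)%type) : elt n :=
  match s with inl (inl i) => EA i | inl (inr i) => EB i
  | inr k => match val k with 0 => EP | 1 => EQ | 2 => ER | 3 => EX | 4 => EY | _ => EW end end.
Lemma encK n : cancel (@enc n) (@dec n). Proof. by case. Qed.
HB.instance Definition _ n := Finite.copy (elt n) (can_type (@encK n)).
Set Implicit Arguments. Unset Strict Implicit.

Definition ltU n (u v : elt n) : bool :=
  match u, v with
  | EA i, EB j => nat_of_ord i != nat_of_ord j
  | EP, EB j | EQ, EB j | ER, EB j => 1 < j
  | EA i, EX | EA i, EY | EA i, EW => 1 < i
  | EP, EX | EQ, EX | EP, EY | ER, EY | EQ, EW | ER, EW => true
  | _, _ => false end.

Lemma ltU_irr n : irreflexive (@ltU n).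
Proof. by case=> // i /=; rewrite eqxx. Qed.

Lemma ltU_trans n : transitive (@ltU n).
Proof. by case=> [j|j||||||] [i|i||||||] [l|l||||||]. Qed.

Definition g1 (c : bool) n (t : elt n) : nat := match t with
 | EP => if c then 0 else 1 | EQ => if c then 1 else 0 | EX => 2 | ER => 3
 | EY => if c then 5 else 4 | EW => if c then 4 else 5 | _ => 0 end.
Definition g2 (c : bool) n (t : elt n) : nat := match t with
 | ER => 0 | EP => if c then 3 else 1 | EY => if c then 5 else 2 | EQ => if c then 1 else 3
 | EX => 4 | EW => if c then 2 else 5 | _ => 0 end.

Definition rk n (c : bool) (k : nat) (t : elt n) : nat :=
 if k == 0 then match t with
   | EA i => if nat_of_ord i == 0 then n+8 else if nat_of_ord i == 1 then n+6 else i
   | EB l => if nat_of_ord l == 0 then n+7 else n+8+l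
   | _ => n + g1 c t end
 else if k == 1 then match t with
   | EA i => if nat_of_ord i == 1 then n+1 else i
   | EB l => if nat_of_ord l == 1 then n else if nat_of_ord l == 0 then n+2 else n+9+l
   | _ => n+3 + g2 c t end
 else match t with
   | EA i => if nat_of_ord i == k then n+4 else 3+i
   | EB l => if nat_of_ord l == k then n+3 else n+5+l
   | EP => 0 | EQ => 1 | ER => 2 | EX => 2*n+5 | EY => 2*n+6 | EW => 2*n+7 end.

Definition inS (c : bool) n (t : elt n) : bool :=
  match t with EY => ~~ c | EW => c | _ => true end.

Ltac crush := rewrite /rk /g1 /g2 /=; repeat (case: ifP => /= ?); lia.

Lemma rk_inj n c k (u v : elt n) : rk c k u = rk c k v -> u = v.
Proof.
case: u => [[i Hi]|[i Hi]||||||]; case: v => [[j Hj]|[j Hj]||||||]; case: c;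
 move=> H; try (exfalso; move: H; crush);
 try (congr EA; apply: val_inj => /=; move: H; crush);
 try (congr EB; apply: val_inj => /=; move: H; crush); done.
Qed.

Lemma rk_fwd n c k (u v : elt n) : k < n -> ltU u v -> rk c k u < rk c k v.
Proof.
case: u => [[i Hi]|[i Hi]||||||]; case: v => [[j Hj]|[j Hj]||||||]; case: c => //= Hk H;
 move: H; crush.
Qed.

Ltac wit k := exists k; split; [lia | crush].

Lemma rk_bwd n c (u v : elt n) : 1 < n -> inS c u -> inS c v -> ~~ ltU u v ->
  exists k, k < n /\ rk c k v <= rk c k u.
Proof.
case: u => [[i Hi]|[i Hi]||||||]; case: v => [[j Hj]|[j Hj]||||||]; case: c => //= Hn _ _ H;
 move: H;
 first [ wit 0 | wit 1 | (move=> H; wit 0) | (move=> H; wit 1) | 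
   (move=> H; wit i) | (move=> H; wit j) | idtac].
all: try (move=> H).
all: try (case: (ltnP i 2) => Hi2).
all: try (case: (ltnP j 2) => Hj2).
all: first [ wit 0 | wit 1 | wit i | wit j | idtac].
all: case: (eqVneq i j) => Hij.
all: try (first [ wit 0 | wit 1 | wit i | wit j]).
all: subst j; move: Hi Hj Hi2 Hj2; case: i => [|[|i]] Hi Hj Hi2 Hj2 //; first [wit 0 | wit 1].
Qed.

Definition U n : finPO := @FinPO (elt n) (@ltU n) (@ltU_irr n) (@ltU_trans n).

Definition subPO (P : finPO) (S : pred P) : finPO :=
  @FinPO {x : P | S x} (fun u v => po_lt (val u) (val v))
    (fun u => po_irr (val u)) (fun y x z => @po_trans P (val y) (val x) (val z)).

Lemma dim_sub (P : finPO) (S : pred P) n (r : 'I_n -> P -> nat) :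
  (forall k u v, r k u = r k v -> u = v) ->
  {in S &, forall u v, po_lt u v = [forall k, r k u < r k v]} ->
  dim_le (subPO S) n.
Proof.
move=> rinj rlt; exists (fun k (u v : subPO S) => r k (val u) < r k (val v)); split.
  move=> k; split; first by move=> u; rewrite ltnn.
  split; first by move=> y x z; apply: ltn_trans.
  move=> x y xy; rewrite -neq_ltn; apply/eqP => /rinj /val_inj E.
  by rewrite E eqxx in xy.
by move=> x y /=; rewrite rlt //; apply: valP.
Qed.

Lemma rk_lt n c : 1 < n -> {in (@inS c n : pred (elt n)) &, forall u v : elt n, ltU u v = [forall k : 'I_n, rk c k u < rk c k v]}.
Proof.
move=> Hn u v Hu Hv; case E: (ltU u v).
  by apply/esym/forallP => k; apply: rk_fwd.
apply/esym/negbTE/negP => /forallP H.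
have [k [Hk Hle]] := rk_bwd Hn Hu Hv (negbT E).
by move: (H (Ordinal Hk)); rewrite /= ltnNge Hle.
Qed.

Definition inA n (t : elt n) : bool := match t with EX | EY | EW => false | _ => true end.

Definition PA n := subPO (@inA n : pred (U n)).
Definition PB n := subPO (@inS false n : pred (U n)).
Definition PC n := subPO (@inS true n : pred (U n)).

Lemma inAB n (t : elt n) : inA t -> inS false t. Proof. by case: t. Qed.
Lemma inAC n (t : elt n) : inA t -> inS true t. Proof. by case: t. Qed.

Definition eAB n (u : PA n) : PB n := exist _ (val u) (inAB (valP u)).
Definition eAC n (u : PA n) : PC n := exist _ (val u) (inAC (valP u)).

Lemma dimB n : 1 < n -> dim_le (PB n) n.
Proof.
move=> Hn; apply: (@dim_sub (U n) (@inS false n) n (fun k t => rk false k t)).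
  by move=> k u v; apply: rk_inj.
exact: rk_lt.
Qed.

Lemma dimC n : 1 < n -> dim_le (PC n) n.
Proof.
move=> Hn; apply: (@dim_sub (U n) (@inS true n) n (fun k t => rk true k t)).
  by move=> k u v; apply: rk_inj.
exact: rk_lt.
Qed.

Lemma dimA n : 1 < n -> dim_le (PA n) n.
Proof.
move=> Hn; apply: (@dim_sub (U n) (@inA n) n (fun k t => rk false k t)).
  by move=> k u v; apply: rk_inj.
by move=> u v Hu Hv; apply: (rk_lt Hn); apply: inAB.
Qed.

Lemma embAB n : po_embedding (@eAB n).
Proof.
split; last by [].
by move=> u v /(congr1 val) /= /val_inj.
Qed.

Lemma embAC n : po_embedding (@eAC n).
Proof.
split; last by [].
by move=> u v /(congr1 val) /= /val_inj.
Qed.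

Section Main.
Variables (n : nat) (D : finPO) (L : 'I_n -> rel D).
Hypothesis Llin : forall k, linear_order (L k).
Hypothesis LD : forall x y : D, po_lt x y = [forall k, L k x y].

Lemma Lirr k x : L k x x = false. Proof. by case: (Llin k) => H _; apply: H. Qed.
Lemma Ltr k x y z : L k x y -> L k y z -> L k x z.
Proof. by case: (Llin k) => _ [H _]; apply: H. Qed.
Lemma Lasym k x y : L k x y -> L k y x -> False.
Proof. by move=> H1 H2; have := Ltr H1 H2; rewrite Lirr. Qed.
Lemma Lall k x y : po_lt x y -> L k x y.
Proof. by rewrite LD => /forallP. Qed.
Lemma Lex x y : ~~ po_lt x y -> x != y -> exists k, L k y x.
Proof.
rewrite LD negb_forall => /existsP [k Hk] xy; exists k.
case: (Llin k) => _ [_ T]; by move: (T x y xy); rewrite (negbTE Hk).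
Qed.
End Main.

Definition mkB n (t : elt n) (H : inS false t) : PB n := exist _ t H.
Definition mkC n (t : elt n) (H : inS true t) : PC n := exist _ t H.
Arguments mkB {n} t H. Arguments mkC {n} t H.

Theorem proposition2p3 (n : nat) : 2 <= n -> ~ amalgamation_property (PO_ n).
Proof.
move=> Hn AP.
have [D [g [h [dD [[ginj glt] [[hinj hlt] comm]]]]]] :=
  AP (PA n) (PB n) (PC n) (@eAB n) (@eAC n) (dimA Hn) (dimB Hn) (dimC Hn) (embAB n) (embAC n).
case: dD => L [Llin LD].
have gl t1 t2 H1 H2 : po_lt (g (mkB t1 H1)) (g (mkB t2 H2)) = ltU t1 t2 by rewrite -glt.
have hl t1 t2 H1 H2 : po_lt (h (mkC t1 H1)) (h (mkC t2 H2)) = ltU t1 t2 by rewrite -hlt.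
have gi t1 t2 H1 H2 : t1 != t2 -> g (mkB t1 H1) != g (mkB t2 H2).
  by apply: contraNneq => /ginj /(congr1 val) /= ->.
have hi t1 t2 H1 H2 : t1 != t2 -> h (mkC t1 H1) != h (mkC t2 H2).
  by apply: contraNneq => /hinj /(congr1 val) /= ->.
have gh t (H : inA t) H1 H2 : g (mkB t H1) = h (mkC t H2).
  have E1 : mkB t H1 = eAB (exist _ t H : PA n) by apply: val_inj.
  have E2 : mkC t H2 = eAC (exist _ t H : PA n) by apply: val_inj.
  by rewrite E1 E2 comm.
pose a i := g (mkB (EA i) isT).
pose b i := g (mkB (EB i) isT).
pose pD := g (mkB EP isT). pose qD := g (mkB EQ isT). pose rD := g (mkB ER isT).
pose xD := g (mkB EX isT). pose yD := g (mkB EY isT). pose wD := h (mkC EW isT).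
have Lall := Lall LD. have Lex := Lex Llin LD.
have Ltr := Ltr Llin. have Lasym := Lasym Llin.
have step1 i : exists k, L k (b i) (a i).
  apply: Lex; first by rewrite /a /b gl /= eqxx.
  exact: gi.
pose rho i := xchoose (step1 i).
have rhoP i : L (rho i) (b i) (a i) := xchooseP (step1 i).
have uniq k i j : L k (b i) (a i) -> L k (b j) (a j) -> i = j.
  move=> H1 H2; apply/eqP/negPn/negP => ij.
  have H3 : L k (a i) (b j) by apply: Lall; rewrite /a /b gl /= val_eqE.
  have H4 : L k (a j) (b i) by apply: Lall; rewrite /a /b gl /= val_eqE eq_sym.
  exact: (Lasym _ _ _ (Ltr _ _ _ _ H1 H3) (Ltr _ _ _ _ H2 H4)).
have rho_inj : injective rho.
  by move=> i j E; apply: (uniq (rho i)); [exact: rhoP | rewrite E; exact: rhoP].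
have surj k : exists m, k = rho m.
  by have /codomP [m ->] := injF_onto rho_inj k; exists m.
have ahw (j : 'I_n) : 1 < j -> L (rho j) (a j) wD.
  move=> Hj; apply: Lall; rewrite /a /wD (gh (EA j) isT isT isT) hl /=; exact: Hj.
have bigm (k : 'I_n) u v m : L k u v -> k = rho m ->
   (1 < m -> po_lt v (b m)) -> (1 < m -> L k (a m) u) -> m < 2.
  move=> Huv Ek Hv Ha; subst k; rewrite ltnNge; apply/negP => Hm.
  have Hvb := Lall (rho m) _ _ (Hv Hm).
  have := Ltr _ _ _ _ (Ltr _ _ _ _ (Ltr _ _ _ _ Huv Hvb) (rhoP m)) (Ha Hm).
  by rewrite Lirr.
have [k1 H1] : exists k, L k xD rD by apply: Lex; [rewrite /xD /rD gl | exact: gi].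
have [m1 E1] := surj k1.
have m1s : m1 < 2.
  apply: (bigm k1 xD rD m1 H1 E1) => Hm; first by rewrite /rD /b gl.
  by rewrite E1; apply: Lall; rewrite /a /xD gl.
have [k2 H2] : exists k, L k yD qD by apply: Lex; [rewrite /yD /qD gl | exact: gi].
have [m2 E2] := surj k2.
have m2s : m2 < 2.
  apply: (bigm k2 yD qD m2 H2 E2) => Hm; first by rewrite /qD /b gl.
  by rewrite E2; apply: Lall; rewrite /a /yD gl.
have wp : ~~ po_lt pD wD by rewrite /pD (gh EP isT isT isT) /wD hl.
have wpn : pD != wD by rewrite /pD (gh EP isT isT isT) /wD; apply: hi.
have [k3 H3] : exists k, L k wD pD by apply: Lex.
have [m3 E3] := surj k3.
have m3s : m3 < 2.
  apply: (bigm k3 wD pD m3 H3 E3) => Hm; first by rewrite /pD /b gl.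
  by rewrite E3; apply: ahw.
have px k : L k pD xD by apply: Lall; rewrite /pD /xD gl.
have qx k : L k qD xD by apply: Lall; rewrite /qD /xD gl.
have py k : L k pD yD by apply: Lall; rewrite /pD /yD gl.
have ry k : L k rD yD by apply: Lall; rewrite /rD /yD gl.
have qw k : L k qD wD by apply: Lall; rewrite /qD (gh EQ isT isT isT) /wD hl.
have rw k : L k rD wD by apply: Lall; rewrite /rD (gh ER isT isT isT) /wD hl.
have d12 : m1 != m2.
  apply/negP => /eqP E; subst k1 k2; rewrite E in H1.
  exact: (Lasym _ _ _ (Ltr _ _ _ _ (qx _) H1) (Ltr _ _ _ _ (ry _) H2)).
have d13 : m1 != m3.
  apply/negP => /eqP E; subst k1 k3; rewrite E in H1.
  exact: (Lasym _ _ _ (Ltr _ _ _ _ (px _) H1) (Ltr _ _ _ _ (rw _) H3)).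
have d23 : m2 != m3.
  apply/negP => /eqP E; subst k2 k3; rewrite E in H2.
  exact: (Lasym _ _ _ (Ltr _ _ _ _ (py _) H2) (Ltr _ _ _ _ (qw _) H3)).
move: d12 d13 d23; rewrite -!val_eqE; clear E1 E2 E3 H1 H2 H3.
move: m1s m2s m3s; case: m1 => [[|[|?]] ?] //; case: m2 => [[|[|?]] ?] //; case: m3 => [[|[|?]] ?] //.
Qed.
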